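(* Let $M$ be a $*$-left Ehresmann monoid with $M=\langle H\rangle_{(2)}$ for an atomic subset $H$. Let $h\in H$ and let $m=h_1h_2\cdots h_n$ be in $H$-canonical form. Then: (i) if $h_1\notin E$ and $h^*<h_1^+$, then $hh_1\cdots h_n$ is an $H$-canonical form of $hm$; (ii) if $h_1\in E$, or $h_1\notin E$ and $h^*\ge h_1^+$, then $hh_1\in H$ and $(hh_1)h_2\cdots h_n$ is an $H$-canonical form of $hm$; (iii) if $h_1\notin E$ and $h^*$, $h_1^+$ are incomparable, then $hh_1^+\in H$ and $(hh_1^+)h_1h_2\cdots h_n$ is an $H$-canonical form of $hm$.
   Context: A $*$-left Ehresmann monoid is a monoid $M$ with unary operations $+,*$ such that $x^+x=x$, $(x^+y^+)^+=x^+y^+$, $x^+y^+=y^+x^+$, $(xy)^+=(xy^+)^+$, $xx^*=x$, $(x^* )^*=x^*$, $x^*y^*=y^*x^*$, $(xy^* )^*y^*=(xy^* )^*$, $(x^* )^+=x^*$, $(x^+)^*=x^+$. Projections: $E=\{a^+\}=\{a^*\}$, ordered by $e\le f$ iff $ef=e$; $\sigma$ is the least monoid congruence containing $E\times E$; $\langle H\rangle_{(2)}$ is the subsemigroup generated by $H$. $H$ is atomic if: (H1) $E\subseteq H$; (H2) $h\in H,e\in E$ imply $he\in H$ and $(he)^*=h^*e$; (H3) if $h\in H$, $k\in H\setminus E$, $h^*\ge k^+$ then $hk\in H$ and $(hk)^*=k^*$; (H4) every $m\in M$ is $\sigma$-related to some $h\in H$; (H5) if $h,k,w\in H$, $hk\,\sigma\,w$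 and $k^*=w^*$, then some $u\in H$ has $u\,\sigma\,h$ and $u^*\ge k^+$. An expression $m=h_1\cdots h_n$ ($n\ge1$, $h_i\in H$) is in $H$-canonical form if $h_i^*<h_{i+1}^+$ for $1\le i<n$ and $h_i\notin E$ for $2\le i\le n$. *)

(* Defs.v *)
From Stdlib Require Import List.
Import ListNotations.
Set Implicit Arguments.

Record LEMonoid := {
  car :> Type;
  mul : car -> car -> car;
  one : car;
  plus : car -> car;
  star : car -> car;
  mulA : forall x y z, mul x (mul y z) = mul (mul x y) z;
  mul1l : forall x, mul one x = x;
  mul1r : forall x, mul x one = x;
  ax_plus1 : forall x, mul (plus x) x = x;
  ax_plus2 : forall x y, plus (mul (plus x) (plus y)) = mul (plus x) (plus y);
  ax_plus3 : forall x y, mul (plus x) (plus y) = mul (plus y) (plus x);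
  ax_plus4 : forall x y, plus (mul x y) = plus (mul x (plus y));
  ax_star1 : forall x, mul x (star x) = x;
  ax_star2 : forall x, star (star x) = star x;
  ax_star3 : forall x y, mul (star x) (star y) = mul (star y) (star x);
  ax_star4 : forall x y, mul (star (mul x (star y))) (star y) = star (mul x (star y));
  ax_mix1 : forall x, plus (star x) = star x;
  ax_mix2 : forall x, star (plus x) = plus x
}.

Section Defs.
Context {M : LEMonoid}.

(** Projections E = { a^+ : a in M } (= { a^* }). *)
Definition isProj (x : M) : Prop := exists a : M, x = plus M a.

Definition ple (e f : M) : Prop := mul M e f = e.
Definition plt (e f : M) : Prop := ple e f /\ e <> f.

Definition is_monoid_congruence (rho : M -> M -> Prop) : Prop :=
  (forall a, rho a a) /\ (forall a b, rho a b -> rho b a) /\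
  (forall a b c, rho a b -> rho b c -> rho a c) /\
  (forall a b c d, rho a b -> rho c d -> rho (mul M a c) (mul M b d)).

Definition sigma (a b : M) : Prop :=
  forall rho, is_monoid_congruence rho ->
    (forall e f, isProj e -> isProj f -> rho e f) -> rho a b.

Fixpoint lprod (l : list M) : M :=
  match l with
  | [] => one M
  | x :: t => mul M x (lprod t)
  end.

(** M = <H>_(2): every element is a product of a nonempty list of elements of H. *)
Definition generates (H : M -> Prop) : Prop :=
  forall m : M, exists l, l <> [] /\ Forall H l /\ lprod l = m.

Definition atomic (H : M -> Prop) : Prop :=
  (forall e, isProj e -> H e) /\
  (forall h e, H h -> isProj e ->
              H (mul M h e) /\ star M (mul M h e) = mul M (star M h) e) /\
  (forall h k, H h -> H k -> ~ isProj k -> ple (plus M k) (star M h) ->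
              H (mul M h k) /\ star M (mul M h k) = star M k) /\
  (forall m, exists h, H h /\ sigma m h) /\
  (forall h k w, H h -> H k -> H w -> sigma (mul M h k) w ->
              star M k = star M w ->
              exists u, H u /\ sigma u h /\ ple (plus M k) (star M u)).

Definition canonical_form (H : M -> Prop) (m : M) (l : list M) : Prop :=
  l <> [] /\ Forall H l /\ lprod l = m /\
  (forall i, S i < length l ->
     plt (star M (nth i l (one M))) (plus M (nth (S i) l (one M)))) /\
  (forall i, 1 <= i < length l -> ~ isProj (nth i l (one M))).

End Defs.

(* Main.v *)
Require Import Defs.
From Stdlib Require Import List Lia.
Import ListNotations.

Set Implicit Arguments.
Section Aux.
Variable M : LEMonoid.

Lemma proj_plus (e : M) : isProj e -> plus M e = e.
Proof. intros [a ->]. rewrite <- (ax_mix2 M a) at 1. rewrite ax_mix1. apply ax_mix2. Qed.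

Lemma proj_star (e : M) : isProj e -> star M e = e.
Proof. intros [a ->]. apply ax_mix2. Qed.

Lemma proj_idem (e : M) : isProj e -> mul M e e = e.
Proof. intros P. rewrite <- (proj_plus P) at 1. apply ax_plus1. Qed.

Lemma proj_comm (e f : M) : isProj e -> isProj f -> mul M e f = mul M f e.
Proof. intros P Q. rewrite <- (proj_plus P), <- (proj_plus Q). apply ax_plus3. Qed.

Lemma proj_mul (e f : M) : isProj e -> isProj f -> isProj (mul M e f).
Proof. intros P Q. exists (mul M e f). rewrite <- (proj_plus P), <- (proj_plus Q).
  symmetry. apply ax_plus2. Qed.

Lemma isProj_star (x : M) : isProj (star M x).
Proof. exists (star M x). symmetry. apply ax_mix1. Qed.

Lemma isProj_plus (x : M) : isProj (plus M x).
Proof. exists x. reflexivity. Qed.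
End Aux.

Theorem mainTheorem8 (M : LEMonoid) (H : M -> Prop)
  (Hat : atomic H) (Hgen : generates H)
  (h h1 : M) (t : list M) (m : M)
  (Hh : H h) (Hcf : canonical_form H m (h1 :: t)) :
  (* (i) *)
  (~ isProj h1 -> plt (star M h) (plus M h1) ->
     canonical_form H (mul M h m) (h :: h1 :: t)) /\
  (* (ii) *)
  (isProj h1 \/ (~ isProj h1 /\ ple (plus M h1) (star M h)) ->
     H (mul M h h1) /\ canonical_form H (mul M h m) (mul M h h1 :: t)) /\
  (* (iii) *)
  (~ isProj h1 -> ~ ple (star M h) (plus M h1) -> ~ ple (plus M h1) (star M h) ->
     H (mul M h (plus M h1)) /\
     canonical_form H (mul M h m) (mul M h (plus M h1) :: h1 :: t)).
Proof.
  destruct Hat as (H1 & H2 & H3 & _).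
  destruct Hcf as (_ & HF & Hp & Hlt & Hnp).
  apply Forall_cons_iff in HF as [Hh1 Ht].
  simpl in *.
  split; [|split].
  - intros Nh1 Hlt0. split; [|split; [|split; [|split]]].
    + discriminate.
    + constructor; auto.
    + simpl; rewrite Hp. reflexivity.
    + intros [|j] Hi; simpl.
      * exact Hlt0.
      * apply Hlt. simpl in *; lia.
    + intros [|[|j]] Hi; simpl in *; [lia| exact Nh1 |].
      apply (Hnp (S j)). lia.
  - intros Hc.
    assert (HH : H (mul M h h1) /\
      forall i, S i < S (length t) ->
        plt (star M (nth i (mul M h h1 :: t) (one M))) (plus M (nth (S i) (mul M h h1 :: t) (one M)))).
    { destruct Hc as [P | [Np Ple]].
      - destruct (H2 h h1 Hh P) as [Hm Hs]. split; [exact Hm|].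
        intros [|j] Hi; [|apply (Hlt (S j)); exact Hi].
        simpl. rewrite Hs.
        specialize (Hlt 0 Hi). simpl in Hlt. rewrite (proj_star P) in Hlt.
        destruct Hlt as [Hle Hne].
        assert (Pe := @isProj_star _ h). assert (Pf := @isProj_plus _ (nth 0 t (one M))).
        split.
        + unfold ple in *. rewrite <- mulA. rewrite Hle. reflexivity.
        + intros E. apply Hne. unfold ple in Hle.
          rewrite <- Hle, <- E.
          rewrite (proj_comm P (proj_mul Pe P)), <- mulA, (proj_idem P). reflexivity.
      - destruct (H3 h h1 Hh Hh1 Np Ple) as [Hm Hs]. split; [exact Hm|].
        intros [|j] Hi; [|apply (Hlt (S j)); exact Hi].
        simpl. rewrite Hs. apply (Hlt 0 Hi). }
    destruct HH as [Hm HL]. split; [exact Hm|]. split; [|split; [|split; [|split]]].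
    + discriminate.
    + constructor; auto.
    + simpl; rewrite <- Hp, mulA. reflexivity.
    + exact HL.
    + intros [|j] Hi; simpl in *; [lia|]. apply (Hnp (S j)). lia.
  - intros Np _ Nle.
    assert (Pe := @isProj_star _ h). assert (Pf := @isProj_plus _ h1).
    destruct (H2 h (plus M h1) Hh Pf) as [Hm Hs]. split; [exact Hm|]. split; [|split; [|split; [|split]]].
    + discriminate.
    + constructor; auto.
    + simpl; rewrite <- Hp, <- (mulA M h), (mulA M (plus M h1)), ax_plus1. reflexivity.
    + intros [|j] Hi; simpl.
      * rewrite Hs. split.
        -- unfold ple. rewrite <- mulA, (proj_idem Pf). reflexivity.
        -- intros E. apply Nle. unfold ple.
           rewrite (proj_comm Pf Pe). exact E.
      * apply Hlt. simpl in *; lia.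
    + intros [|[|j]] Hi; simpl in *; [lia| exact Np |].
      apply (Hnp (S j)). lia.
Qed.
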